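(* Let $R$ be a skew field, $a_1,\dots,a_4\in R^*$, $A_i=a_ia_{i+1}a_{i+2}a_{i+3}$ (indices mod $4$) with $1+A_i\ne0$ for all $i$, and define $$b_1=(1+A_3^{-1})a_3,\quad b_2=(1+A_4)^{-1}a_4,\quad b_3=(1+A_1^{-1})a_1,\quad b_4=(1+A_2)^{-1}a_2,$$ and $B_i=b_ib_{i+1}b_{i+2}b_{i+3}$. Then for all $i\in\mathbb Z/4\mathbb Z$: $$b_ib_{i+1}=(a_ia_{i+1})^{-1},\qquad A_i=B_{i+2}^{-1}.$$ *)

(* Defs.v *)
From mathcomp Require Import all_boot all_order all_algebra.
Set Implicit Arguments. Unset Strict Implicit. Unset Printing Implicit Defensive.
Import GRing.Theory.
Local Open Scope ring_scope.

Definition skew_field (R : unitRingType) : Prop :=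
  forall x : R, x != 0 -> x \is a GRing.unit.

(* Indices in Z/4Z are represented by 'I_4 = {0,1,2,3};
   paper index j (1..4) corresponds to ordinal j-1. *)
Definition sh (k : nat) (i : 'I_4) : 'I_4 := inord ((i + k) %% 4).

Definition cycprod (R : unitRingType) (x : 'I_4 -> R) (i : 'I_4) : R :=
  x i * x (sh 1 i) * x (sh 2 i) * x (sh 3 i).

Definition bfam (R : unitRingType) (a : 'I_4 -> R) (i : 'I_4) : R :=
  let A := cycprod a in
  match nat_of_ord i with
  | 0 => (1 + (A (inord 2))^-1) * a (inord 2)
  | 1 => (1 + A (inord 3))^-1 * a (inord 3)
  | 2 => (1 + (A (inord 0))^-1) * a (inord 0)
  | _ => (1 + A (inord 1))^-1 * a (inord 1)
  end.

(* Main.v *)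
Require Import Defs.
From mathcomp Require Import all_boot all_order all_algebra.
Import GRing.Theory.
Local Open Scope ring_scope.

Section Alg.
Variable R : unitRingType.

Lemma conjinv (x u v : R) : u \is a GRing.unit -> v \is a GRing.unit ->
  x * v = u * x -> x * v^-1 = u^-1 * x.
Proof.
move=> uu uv h.
by rewrite -[in RHS](mulrK uv x) mulrA h mulKr.
Qed.

Lemma invA (u : R) : u \is a GRing.unit -> (1 + u) \is a GRing.unit ->
  (1 + u^-1) * (1 + u)^-1 = u^-1.
Proof.
move=> uu u1.
have -> : 1 + u^-1 = u^-1 * (1 + u) by rewrite mulrDr mulr1 mulVr // addrC.
by rewrite mulrK.
Qed.

Lemma invB (u : R) : u \is a GRing.unit -> (1 + u) \is a GRing.unit ->
  (1 + u)^-1 * (1 + u^-1) = u^-1.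
Proof.
move=> uu u1.
have -> : 1 + u^-1 = (1 + u) * u^-1 by rewrite mulrDl mul1r mulrV // addrC.
by rewrite mulKr.
Qed.

Lemma L0 (x0 x1 x2 x3 : R) :
  x0 \is a GRing.unit -> x1 \is a GRing.unit -> x2 \is a GRing.unit -> x3 \is a GRing.unit ->
  (1 + x2 * x3 * x0 * x1) \is a GRing.unit -> (1 + x3 * x0 * x1 * x2) \is a GRing.unit ->
  (1 + (x2 * x3 * x0 * x1)^-1) * x2 * ((1 + x3 * x0 * x1 * x2)^-1 * x3) = (x0 * x1)^-1.
Proof.
move=> u0 u1 u2 u3 v2 v3.
have w01 : x0 * x1 \is a GRing.unit by rewrite unitrMl.
have w23 : x2 * x3 \is a GRing.unit by rewrite unitrMl.
have w : x2 * x3 * x0 * x1 \is a GRing.unit by rewrite -mulrA unitrMl.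
rewrite !mulrA -(mulrA _ x2) (conjinv x2 _ _ v2 v3); last by rewrite mulrDr mulrDl mulr1 mul1r !mulrA.
rewrite mulrA invA // -mulrA -(mulrA (x2 * x3) x0 x1) invrM // mulrVK //.
Qed.

Lemma L1 (x0 x1 x2 x3 : R) :
  x0 \is a GRing.unit -> x1 \is a GRing.unit -> x2 \is a GRing.unit -> x3 \is a GRing.unit ->
  (1 + x3 * x0 * x1 * x2) \is a GRing.unit ->
  (1 + x0 * x1 * x2 * x3) \is a GRing.unit ->
  (1 + x3 * x0 * x1 * x2)^-1 * x3 * ((1 + (x0 * x1 * x2 * x3)^-1) * x0) = (x1 * x2)^-1.
Proof.
move=> u0 u1 u2 u3 v3 v0.
have w12 : x1 * x2 \is a GRing.unit by rewrite unitrMl.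
have w30 : x3 * x0 \is a GRing.unit by rewrite unitrMl.
have w : x0 * x1 * x2 * x3 \is a GRing.unit by rewrite !unitrMl.
have w' : x3 * x0 * x1 * x2 \is a GRing.unit by rewrite !unitrMl.
have e : x3 * (1 + (x0 * x1 * x2 * x3)^-1) = (1 + (x3 * x0 * x1 * x2)^-1) * x3.
  by rewrite mulrDr mulrDl mulr1 mul1r (conjinv x3 _ _ w' w) // !mulrA.
rewrite !mulrA -(mulrA _ x3) e mulrA invB // -mulrA -(mulrA (x3 * x0) x1 x2) invrM // mulrVK //.
Qed.
End Alg.

Lemma shE (k m : nat) : (m < 4)%N -> sh k (inord m : 'I_4) = inord ((m + k) %% 4)%N.
Proof. by move=> h; rewrite /sh inordK. Qed.

Theorem lemma4p4 (R : unitRingType) (hR : skew_field R) (a : 'I_4 -> R)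
  (ha : forall i, a i != 0) (hA : forall i, 1 + cycprod a i != 0) :
  forall i : 'I_4,
    bfam a i * bfam a (sh 1 i) = (a i * a (sh 1 i))^-1 /\
    cycprod a i = (cycprod (bfam a) (sh 2 i))^-1.
Proof.
have ua : forall i, a i \is a GRing.unit by move=> i; apply: hR.
have uA : forall i, 1 + cycprod a i \is a GRing.unit by move=> i; apply: hR.
have P1 : forall i, bfam a i * bfam a (sh 1 i) = (a i * a (sh 1 i))^-1.
  move=> i; rewrite -[i]inord_val.
  have := uA (inord 0); have := uA (inord 1); have := uA (inord 2); have := uA (inord 3).
  case: i => [[|[|[|[|n]]]] Hi] //=;
    rewrite /bfam /cycprod !shE ?inordK //= => h3 h2 h1 h0.
  - by apply: L0.
  - by apply: L1.
  - by apply: L0.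
  - by apply: L1.
have Q0 := P1 (inord 0); have Q1 := P1 (inord 1).
have Q2 := P1 (inord 2); have Q3 := P1 (inord 3).
rewrite !shE // in Q0 Q1 Q2 Q3; simpl in Q0, Q1, Q2, Q3.
have u2 : forall i j, a i * a j \is a GRing.unit by move=> i j; rewrite unitrMl.
move=> i; split; first exact: P1.
rewrite -[i]inord_val.
case: i => [[|[|[|[|n]]]] Hi] //=; rewrite /cycprod !shE //=;
  rewrite -(mulrA _ (bfam a _)) ?Q0 ?Q1 ?Q2 ?Q3 -invrM // invrK !mulrA //.
Qed.
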